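(* Let $(a_n)_{n\ge1}$ be a sequence of positive real numbers with $\sum_n a_n=\infty$, and let $(m_n)_{n\ge1}$ be a sequence of positive integers such that for every $n\ge2$: $m_n>m_{n-1}$ and $1000\cdot4^{-m_n}\le a_n4^{-m_{n-1}}$. Then for Lebesgue-almost every $t\in[0,1]$ there are infinitely many $n$ such that $\operatorname{dist}(t,4^{-m_n}\mathbb{N})\le 4^{-m_n}a_n$.
   Context: $4^{-m}\mathbb{N}=\{4^{-m}k:k\in\mathbb{N}\}$. *)

(* Defs.v *)
From Stdlib Require Import Reals.
Open Scope R_scope.

Definition lebesgue_null (N : R -> Prop) : Prop :=
  forall eps : R, 0 < eps ->
    exists a b : nat -> R,
      (forall k, a k <= b k) /\
      (forall x, N x -> exists k, a k < x < b k) /\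
      (forall n, sum_f_R0 (fun k => b k - a k) n <= eps).

(* dist(t, 4^{-m} N) <= r, with N = {0,1,2,...}; the distance to this discrete
   closed set is attained, so it is <= r iff some point lies within r. *)
Definition dist_grid_le (t : R) (m : nat) (r : R) : Prop :=
  exists k : nat, Rabs (t - INR k * (/ 4) ^ m) <= r.

(* Main.v *)
Require Import Defs.
From Stdlib Require Import Reals Lra Lia List Bool ClassicalEpsilon Classical ZArith.
Open Scope R_scope.
Fixpoint cnt (P : nat -> bool) (n : nat) : nat :=
  match n with O => O | S n' => (cnt P n' + (if P n' then 1 else 0))%nat end.

Lemma cnt_ext P Q n : (forall i, (i < n)%nat -> P i = Q i) -> cnt P n = cnt Q n.
Proof. induction n; intros H; simpl; auto. rewrite IHn by (intros; apply H; lia). rewrite H by lia. auto. Qed.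

Lemma cnt_add P x y : cnt P (x + y) = (cnt P x + cnt (fun i => P (x + i)%nat) y)%nat.
Proof. induction y; simpl. rewrite Nat.add_0_r; lia. rewrite Nat.add_succ_r. simpl. rewrite IHy. lia. Qed.

Lemma cnt_true n : cnt (fun _ => true) n = n.
Proof. induction n; simpl; lia. Qed.

Lemma cnt_false n : cnt (fun _ => false) n = O.
Proof. induction n; simpl; lia. Qed.

Lemma cnt_prod P Q X Y : (Y <> 0)%nat ->
  cnt (fun j => P (j / Y) && Q (j mod Y))%nat (X * Y) = (cnt P X * cnt Q Y)%nat.
Proof.
  intros HY. induction X. simpl. auto.
  replace (S X * Y)%nat with (X * Y + Y)%nat by lia.
  rewrite cnt_add, IHX. simpl cnt.
  assert (E : cnt (fun i => P ((X * Y + i) / Y) && Q ((X * Y + i) mod Y))%nat Y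
              = cnt (fun i => P X && Q i) Y).
  { apply cnt_ext. intros i Hi. f_equal.
    + f_equal. rewrite Nat.add_comm, Nat.div_add by auto.
      rewrite Nat.div_small by auto. lia.
    + f_equal. rewrite Nat.add_comm, Nat.Div0.mod_add.
      apply Nat.mod_small; auto. }
  rewrite E. destruct (P X); simpl.
  - replace (cnt (fun i => Q i) Y) with (cnt Q Y) by auto. lia.
  - rewrite cnt_false. lia.
Qed.

Lemma cnt_nz X : cnt (fun q => negb (q =? 0)%nat) X = (X - 1)%nat.
Proof. induction X; simpl; auto. rewrite IHX. destruct X; simpl; lia. Qed.

Definition lenp (p : R*R) : R := snd p - fst p.
Fixpoint lsum (l : list (R*R)) : R :=
  match l with nil => 0 | p :: l' => lenp p + lsum l' end.

Lemma lsum_app l1 l2 : lsum (l1 ++ l2) = lsum l1 + lsum l2.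
Proof. induction l1; simpl; [lra|rewrite IHl1; lra]. Qed.

Fixpoint mysum (f : nat -> R) (c : nat) : R :=
  match c with O => 0 | S c' => mysum f c' + f c' end.

Lemma mysum_shift f c : mysum f (S c) = f O + mysum (fun k => f (S k)) c.
Proof. induction c; simpl in *; [lra|]. rewrite IHc. lra. Qed.

Lemma mysum_f_R0 f n : sum_f_R0 f n = mysum f (S n).
Proof. induction n; simpl in *; [lra|]. rewrite IHn. simpl. lra. Qed.

Lemma mysum_ext f g c : (forall k, (k < c)%nat -> f k = g k) -> mysum f c = mysum g c.
Proof. induction c; intros H; simpl; [lra|]. rewrite IHc by (intros; apply H; lia). rewrite H by lia. lra. Qed.

Lemma mysum_nth_le l : (forall p, In p l -> fst p <= snd p) ->
  forall c, mysum (fun k => lenp (nth k l (0,0))) c <= lsum l.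
Proof.
  induction l as [|x l IH]; intros Hl c.
  - induction c; simpl; [lra|]. destruct c; simpl in *; unfold lenp in *; simpl in *; lra.
  - destruct c.
    + simpl. assert (0 <= lenp x) by (unfold lenp; specialize (Hl x (or_introl eq_refl)); lra).
      assert (0 <= lsum l). { specialize (IH (fun p H => Hl p (or_intror H)) O). simpl in IH. lra. }
      lra.
    + rewrite mysum_shift. simpl lsum. simpl nth.
      specialize (IH (fun p H => Hl p (or_intror H)) c). lra.
Qed.

Section Flat.
Variable fam : nat -> list (R*R).
Fixpoint flat (n : nat) : list (R*R) :=
  match n with O => nil | S n' => flat n' ++ fam n' end.

Hypothesis fam_ne : forall N, fam N <> nil.

Lemma flat_len n : (n <= length (flat n))%nat.
Proof.
  induction n; simpl; [lia|]. rewrite length_app.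
  specialize (fam_ne n). destruct (fam n); [congruence|simpl; lia].
Qed.

Lemma flat_prefix i j : (i <= j)%nat -> exists l, flat j = flat i ++ l.
Proof.
  induction 1. exists nil. rewrite app_nil_r. auto.
  destruct IHle as [l Hl]. exists (l ++ fam m). simpl. rewrite Hl, app_assoc. auto.
Qed.

Lemma flat_nth i j p : (i <= j)%nat -> (p < length (flat i))%nat ->
  nth p (flat j) (0,0) = nth p (flat i) (0,0).
Proof. intros Hij Hp. destruct (flat_prefix i j Hij) as [l ->]. apply app_nth1; auto. Qed.

Lemma flat_in n p : In p (flat n) -> exists N, In p (fam N).
Proof.
  induction n; simpl; [tauto|]. intros H. apply in_app_or in H. destruct H; eauto.
Qed.

Lemma lsum_flat n : lsum (flat (S n)) = sum_f_R0 (fun N => lsum (fam N)) n.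
Proof. induction n. simpl. auto. simpl flat. rewrite lsum_app. simpl in IHn |- *. rewrite <- IHn. simpl. auto. Qed.
End Flat.

Lemma geom_sum eps n : sum_f_R0 (fun N => eps / 2 ^ S N) n = eps - eps / 2 ^ S n.
Proof.
  induction n. simpl. field.
  change (sum_f_R0 (fun N => eps / 2 ^ S N) n + eps / 2 ^ S (S n) = eps - eps / 2 ^ S (S n)).
  rewrite IHn. replace (2 ^ S (S n)) with (2 * 2 ^ S n) by (simpl; ring).
  assert (2 ^ S n <> 0) by (apply pow_nonzero; lra). field. auto.
Qed.

Lemma cover_lists (X : R -> Prop) (eps : R) (fam : nat -> list (R*R)) :
  0 < eps ->
  (forall N, fam N <> nil) ->
  (forall N p, In p (fam N) -> fst p <= snd p) ->
  (forall N, lsum (fam N) <= eps / 2 ^ S N) ->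
  (forall x, X x -> exists N p, In p (fam N) /\ fst p < x < snd p) ->
  exists a b : nat -> R,
      (forall k, a k <= b k) /\
      (forall x, X x -> exists k, a k < x < b k) /\
      (forall n, sum_f_R0 (fun k => b k - a k) n <= eps).
Proof.
  intros Heps Hne Hord Hsum Hcov.
  set (q := fun k => nth k (flat fam (S k)) (0,0)).
  exists (fun k => fst (q k)), (fun k => snd (q k)). split; [|split].
  - intros k. unfold q.
    destruct (flat_in fam (S k) _ (nth_In _ (0,0) (flat_len fam Hne (S k)))) as [N HN].
    eapply Hord; eauto.
  - intros x Hx. destruct (Hcov x Hx) as [N [p [Hp Hx']]].
    assert (Hin : In p (flat fam (S N))) by (simpl; apply in_or_app; auto).
    destruct (In_nth (flat fam (S N)) p (0,0) Hin) as [i [Hi Hni]].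
    exists i. unfold q.
    assert (E : nth i (flat fam (S i)) (0,0) = p).
    { destruct (Compare_dec.le_lt_dec i N).
      - rewrite <- (flat_nth fam (S i) (S N)) by (try lia; apply flat_len; auto). auto.
      - rewrite (flat_nth fam (S N) (S i)) by lia. auto. }
    rewrite E. auto.
  - intros n. rewrite mysum_f_R0.
    rewrite (mysum_ext _ (fun k => lenp (nth k (flat fam (S n)) (0,0)))).
    + eapply Rle_trans. apply mysum_nth_le.
      { intros p Hp. destruct (flat_in fam _ _ Hp) as [N HN]. eauto. }
      rewrite lsum_flat. eapply Rle_trans. apply sum_Rle. intros; apply Hsum.
      rewrite geom_sum. assert (0 < eps / 2 ^ S n). { apply Rdiv_lt_0_compat; auto. apply pow_lt; lra. } lra.
    + intros k Hk. unfold q, lenp. rewrite (flat_nth fam (S k) (S n)); try lia.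
      auto. apply flat_len; auto.
Qed.

Lemma pow4_inv_mul n : 4 ^ n * (/4) ^ n = 1.
Proof. rewrite <- Rpow_mult_distr. replace (4 * /4) with 1 by field. apply pow1. Qed.

Lemma INR4pow x : INR (4 ^ x)%nat = 4 ^ x.
Proof. rewrite pow_INR. replace (INR 4) with 4 by (simpl; lra). auto. Qed.

Lemma pow4_pos x : (0 < 4 ^ x)%nat.
Proof. apply Nat.neq_0_lt_0, Nat.pow_nonzero. lia. Qed.

Lemma kex x : exists k : nat, 0 < x -> (/4)^k <= x /\ (k = O \/ x < 4 * (/4)^k).
Proof.
  destruct (Rlt_dec 0 x) as [Hx|Hx]; [|exists O; intros; contradiction].
  assert (Hlt : Rabs (/4) < 1) by (rewrite Rabs_pos_eq; lra).
  destruct (pow_lt_1_zero (/4) Hlt x Hx) as [K HK].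
  specialize (HK K (le_n K)). rewrite Rabs_pos_eq in HK by (apply pow_le; lra).
  assert (H : forall K, (/4)^K <= x -> exists k, (/4)^k <= x /\ (k = O \/ x < 4 * (/4)^k)).
  { induction K0; intros HK0. exists O; auto.
    destruct (Rle_dec ((/4)^K0) x) as [h|h]. apply IHK0; auto.
    exists (S K0). split; auto. right. simpl.
    replace (4 * (/4 * (/4)^K0)) with ((/4)^K0) by field. lra. }
  destruct (H K) as [k Hk]; [lra|]. exists k; auto.
Qed.
Section Main.
Variable a : nat -> R.
Variable m : nat -> nat.
Hypothesis ha_pos : forall n, (1 <= n)%nat -> 0 < a n.
Hypothesis hm_inc : forall n, (2 <= n)%nat -> (m (n - 1)%nat < m n)%nat.
Hypothesis hm_gap : forall n, (2 <= n)%nat ->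
     1000 * (/ 4) ^ (m n) <= a n * (/ 4) ^ (m (n - 1)%nat).

Lemma minc n : (1 <= n)%nat -> (m n < m (S n))%nat.
Proof. intros H. specialize (hm_inc (S n)). simpl in hm_inc. rewrite Nat.sub_0_r in hm_inc. apply hm_inc. lia. Qed.

Definition kk n : nat := proj1_sig (constructive_indefinite_description _ (kex (a n))).
Definition b n : R := (/4) ^ (kk n).

Lemma kk_spec n : (1 <= n)%nat -> b n <= a n /\ (kk n = O \/ a n < 4 * b n).
Proof. intros H. unfold b, kk. destruct (constructive_indefinite_description _ _) as [k Hk]. simpl. apply Hk, ha_pos, H. Qed.

Lemma b_pos n : 0 < b n.
Proof. unfold b. apply pow_lt. lra. Qed.

Lemma b_le1 n : b n <= 1.
Proof. unfold b. induction (kk n); simpl; lra. Qed.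

Section FixN.
Variable N : nat.
Hypothesis HN : (1 <= N)%nat.

Definition sel n : bool := ((N <=? n) && (m n + kk n <=? m (S n)))%nat.
Definition fP n : R := if sel n then 1 - b n else 1.
Definition cT n : R := if sel n then b n else 0.
Fixpoint PP M : R := match M with O => fP O | S M' => PP M' * fP M end.
Definition dd M : nat := (m (S (S M)) - m (S M))%nat.

Fixpoint Gb (M : nat) (j : nat) : bool :=
  match M with
  | O => true
  | S M' => Gb M' (j / 4 ^ dd M')%nat &&
      (if sel M then negb (((j mod 4 ^ dd M') / 4 ^ (dd M' - kk M)) =? 0)%nat else true)
  end.

Lemma sel0 : sel O = false.
Proof. unfold sel. destruct N; [lia|]. simpl. auto. Qed.

Lemma sel_le n : sel n = true -> (N <= n)%nat /\ (m n + kk n <= m (S n))%nat.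
Proof. unfold sel. intros H. apply andb_true_iff in H. destruct H as [H1 H2].
  apply Nat.leb_le in H1. apply Nat.leb_le in H2. auto. Qed.

Lemma dd_split M : (m (S (S M)) = m (S M) + dd M)%nat.
Proof. unfold dd. pose proof (minc (S M)). lia. Qed.

Lemma count_eq M : INR (cnt (Gb M) (4 ^ m (S M))) = 4 ^ m (S M) * PP M.
Proof.
  induction M.
  - simpl PP. unfold fP. rewrite sel0. rewrite (cnt_ext _ (fun _ => true)) by auto.
    rewrite cnt_true, INR4pow. ring.
  - replace (4 ^ m (S (S M)))%nat with (4 ^ m (S M) * 4 ^ dd M)%nat
      by (rewrite dd_split, Nat.pow_add_r; reflexivity).
    rewrite dd_split.
    set (Y := (4 ^ dd M)%nat).
    set (Qs := fun r => if sel (S M) then negb ((r / 4 ^ (dd M - kk (S M))) =? 0)%nat else true).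
    rewrite (cnt_ext _ (fun j => Gb M (j / Y) && Qs (j mod Y))%nat) by (intros; reflexivity).
    rewrite (cnt_prod (Gb M) Qs) by (unfold Y; pose proof (pow4_pos (dd M)); lia).
    rewrite mult_INR, IHM. simpl PP. unfold fP, Qs.
    destruct (sel (S M)) eqn:Hs.
    + destruct (sel_le _ Hs) as [_ Hk].
      assert (Hkd : (kk (S M) <= dd M)%nat) by (unfold dd; lia).
      assert (EY : Y = (4 ^ kk (S M) * 4 ^ (dd M - kk (S M)))%nat).
      { unfold Y. rewrite <- Nat.pow_add_r. f_equal. lia. }
      rewrite EY.
      assert (EQ : cnt (fun r => negb ((r / 4 ^ (dd M - kk (S M))) =? 0))%nat (4 ^ kk (S M) * 4 ^ (dd M - kk (S M)))
        = (cnt (fun q => negb (q =? 0)) (4 ^ kk (S M)) * cnt (fun _ => true) (4 ^ (dd M - kk (S M))))%nat).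
      { rewrite <- cnt_prod by (pose proof (pow4_pos (dd M - kk (S M))); lia).
        apply cnt_ext. intros. rewrite andb_true_r. reflexivity. }
      rewrite EQ.
      rewrite cnt_nz, cnt_true, mult_INR, minus_INR by (pose proof (pow4_pos (kk (S M))); lia).
      rewrite !INR4pow. unfold b. rewrite pow_add.
      replace (4 ^ dd M) with (4 ^ kk (S M) * 4 ^ (dd M - kk (S M))).
      2:{ rewrite <- pow_add. f_equal. lia. }
      simpl INR. pose proof (pow4_inv_mul (kk (S M))).
      transitivity (4 ^ m (S M) * PP M * ((4 ^ kk (S M) - 4 ^ kk (S M) * (/4) ^ kk (S M)) * 4 ^ (dd M - kk (S M)))).
      { rewrite H. ring. }
      ring.
    + rewrite cnt_true. unfold Y. rewrite INR4pow, pow_add. ring.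
Qed.

Lemma Gb_bad M : forall t j, 0 <= t -> INR j <= 4 ^ m (S M) * t < INR j + 1 ->
  (forall n, (N <= n)%nat -> ~ dist_grid_le t (m n) ((/4) ^ (m n) * a n)) -> Gb M j = true.
Proof.
  induction M; intros t j Ht Hj Hbad; [reflexivity|].
  simpl Gb. set (Y := (4 ^ dd M)%nat).
  set (q := (j / Y)%nat). set (r := (j mod Y)%nat).
  assert (HY : (0 < Y)%nat) by apply pow4_pos.
  assert (Ejq : j = (Y * q + r)%nat) by (apply Nat.div_mod; lia).
  assert (Hr : (r < Y)%nat) by (apply Nat.mod_upper_bound; lia).
  set (u := 4 ^ m (S M) * t).
  assert (EL : 4 ^ m (S (S M)) * t = u * INR Y).
  { unfold u, Y. rewrite INR4pow, dd_split, pow_add. ring. }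
  rewrite EL in Hj.
  assert (Hj' : INR Y * INR q + INR r <= u * INR Y < INR Y * INR q + INR r + 1).
  { rewrite Ejq, plus_INR, mult_INR in Hj. lra. }
  assert (HYr : 0 < INR Y) by (apply lt_0_INR; lia).
  assert (Hr1 : INR r + 1 <= INR Y) by (rewrite <- S_INR; apply le_INR; lia).
  assert (Hr0 : 0 <= INR r) by apply pos_INR.
  assert (Hq : INR q <= u < INR q + 1).
  { split.
    - apply (Rmult_le_reg_r (INR Y)); auto. lra.
    - apply (Rmult_lt_reg_r (INR Y)); auto. lra. }
  rewrite (IHM t q Ht Hq Hbad). simpl.
  destruct (sel (S M)) eqn:Hs; [|reflexivity].
  destruct (sel_le _ Hs) as [HNs Hk].
  destruct ((r / 4 ^ (dd M - kk (S M))) =? 0)%nat eqn:Hz; [|reflexivity].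
  exfalso. apply (Hbad (S M) HNs). exists q.
  apply Nat.eqb_eq in Hz. apply Nat.div_small_iff in Hz; [|pose proof (pow4_pos (dd M - kk (S M))); lia].
  assert (Hkd : (kk (S M) <= dd M)%nat) by (unfold dd; lia).
  set (Z := (4 ^ (dd M - kk (S M)))%nat) in *.
  assert (EYZ : INR Y = 4 ^ kk (S M) * INR Z).
  { unfold Y, Z. rewrite !INR4pow, <- pow_add. f_equal. lia. }
  assert (HZ : INR r + 1 <= INR Z) by (rewrite <- S_INR; apply le_INR; lia).
  assert (Hw := pow4_inv_mul (kk (S M))).
  assert (Hwp : 0 < 4 ^ kk (S M)) by (apply pow_lt; lra).
  assert (HZp : 0 < INR Z) by (apply lt_0_INR; apply pow4_pos).
  assert (Hd : 0 <= u - INR q <= (/4) ^ kk (S M)).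
  { split; [lra|].
    assert ((u - INR q) * INR Y < INR Z) by lra.
    rewrite EYZ in H.
    assert ((u - INR q) * 4 ^ kk (S M) < 1).
    { apply (Rmult_lt_reg_r (INR Z)); auto. lra. }
    assert ((u - INR q) * 4 ^ kk (S M) * (/4) ^ kk (S M) <= 1 * (/4) ^ kk (S M)).
    { apply Rmult_le_compat_r. apply pow_le; lra. lra. }
    rewrite Rmult_assoc, Hw in H1. lra. }
  destruct (kk_spec (S M)) as [Hb _]; [lia|]. unfold b in Hb.
  assert (Et : t - INR q * (/4) ^ m (S M) = (u - INR q) * (/4) ^ m (S M)).
  { unfold u. pose proof (pow4_inv_mul (m (S M))).
    transitivity (t * (4 ^ m (S M) * (/ 4) ^ m (S M)) - INR q * (/ 4) ^ m (S M)); [rewrite H; ring| ring]. }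
  rewrite Et, Rabs_mult, Rabs_pos_eq by lra. rewrite (Rabs_pos_eq ((/4) ^ _)) by (apply pow_le; lra).
  rewrite Rmult_comm. apply Rmult_le_compat_l. apply pow_le; lra. lra.
Qed.

Lemma cT_nonneg n : 0 <= cT n.
Proof. unfold cT. destruct (sel n); [pose proof (b_pos n); lra|lra]. Qed.

Lemma PP_bound M : 0 <= PP M /\ PP M * (1 + sum_f_R0 cT M) <= 1.
Proof.
  induction M.
  - simpl. unfold fP, cT. rewrite sel0. lra.
  - destruct IHM as [H0 H1]. simpl PP. simpl sum_f_R0.
    assert (HT : 0 <= sum_f_R0 cT M) by (apply cond_pos_sum; apply cT_nonneg).
    unfold fP, cT. pose proof (b_pos (S M)). pose proof (b_le1 (S M)).
    destruct (sel (S M)).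
    + split. apply Rmult_le_pos; lra.
      assert (PP M * (1 - b (S M)) * (1 + (sum_f_R0 cT M + b (S M))) =
              PP M * (1 + sum_f_R0 cT M) - PP M * b (S M) * (sum_f_R0 cT M + b (S M))) by ring.
      assert (0 <= PP M * b (S M) * (sum_f_R0 cT M + b (S M))).
      { apply Rmult_le_pos. apply Rmult_le_pos; lra. lra. } change (fun n => if sel n then b n else 0) with cT. lra.
    + change (fun n => if sel n then b n else 0) with cT. split; lra.
Qed.

Lemma pow_inv4_anti x y : (y <= x)%nat -> (/4) ^ x <= (/4) ^ y.
Proof.
  intros H. replace x with (y + (x - y))%nat by lia. rewrite pow_add.
  assert (0 <= (/4) ^ y) by (apply pow_le; lra).
  assert ((/4) ^ (x - y) <= 1) by (induction (x - y)%nat; simpl; lra).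
  assert (0 <= (/4) ^ (x - y)) by (apply pow_le; lra). nra.
Qed.

Lemma b_ratio n : (1 <= n)%nat -> (m (S n) < m n + kk n)%nat -> b n <= b (S n) / 16.
Proof.
  intros Hn Hlt. set (d := (m (S n) - m n)%nat).
  pose proof (minc n Hn) as Hmi.
  assert (Hb : b n <= (/4) ^ d / 4).
  { unfold b. replace ((/4) ^ d / 4) with ((/4) ^ (S d)) by (simpl; field). apply pow_inv4_anti. unfold d. lia. }
  assert (Hg : 1000 * (/4) ^ d <= a (S n)).
  { pose proof (hm_gap (S n)) as G. simpl in G. rewrite Nat.sub_0_r in G.
    replace (m (S n)) with (m n + d)%nat in G by (unfold d; lia). rewrite pow_add in G.
    assert (0 < (/4) ^ m n) by (apply pow_lt; lra).
    apply (Rmult_le_reg_l ((/4) ^ m n)); auto. assert (G' := G (ltac:(lia))). nra. }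
  assert (Hd1 : (/4) ^ d <= /4) by (replace (/4) with ((/4) ^ 1) at 2 by (simpl; ring); apply pow_inv4_anti; unfold d; lia).
  destruct (kk_spec (S n)) as [_ [Hk | Hk]]; [lia| |].
  - unfold b at 2. rewrite Hk. simpl. lra.
  - pose proof (b_pos (S n)). assert (0 < (/4) ^ d) by (apply pow_lt; lra). lra.
Qed.

Hypothesis ha_div : cv_infty (fun K => sum_f_R0 (fun k => a (S k)) K).

Lemma PP_small eps : 0 < eps -> exists M, PP M <= eps.
Proof.
  intros Heps.
  destruct (classic (forall N0, exists n, (N0 <= n)%nat /\ 1 <= a n)) as [HA|HB].
  - destruct (HA N) as [n [Hn Ha]].
    assert (Hk : kk n = O).
    { destruct (kk_spec n) as [_ [Hk|Hk]]; [lia|auto|].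
      unfold b in Hk. destruct (kk n) as [|k]; [auto|]. exfalso.
      assert ((/4) ^ k <= 1) by (apply (pow_inv4_anti k 0); lia).
      simpl in Hk. lra. }
    assert (Hs : sel n = true).
    { unfold sel. apply andb_true_iff. split; apply Nat.leb_le; [auto|].
      pose proof (minc n). lia. }
    destruct n as [|n']; [lia|]. exists (S n'). simpl PP. unfold fP. rewrite Hs.
    unfold b. rewrite Hk. simpl. lra.
  - apply not_all_ex_not in HB. destruct HB as [N0 HN0].
    assert (HB : forall n, (N0 <= n)%nat -> a n < 1).
    { intros n Hn. apply Rnot_le_lt. intros H. apply HN0. exists n; auto. }
    set (N1 := Nat.max N0 N).
    set (u := fun n => if (N <=? n)%nat then b n else 0).
    assert (Hu0 : forall n, 0 <= u n) by (intros; unfold u; destruct (N <=? n)%nat; [pose proof (b_pos n)|]; lra).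
    assert (Hu1 : forall n, u n <= 1) by (intros; unfold u; destruct (N <=? n)%nat; [pose proof (b_le1 n)|]; lra).
    assert (C1 : forall n, u n <= cT n + u (S n) / 16).
    { intros n. unfold u, cT. destruct (N <=? n)%nat eqn:E.
      - apply Nat.leb_le in E. assert (E' : (N <=? S n)%nat = true) by (apply Nat.leb_le; lia).
        rewrite E'. unfold sel. rewrite (proj2 (Nat.leb_le _ _) E). simpl.
        pose proof (b_pos (S n)).
        destruct (m n + kk n <=? m (S n))%nat eqn:E2; [lra|].
        apply Nat.leb_gt in E2. pose proof (b_ratio n ltac:(lia) E2). lra.
      - unfold sel. rewrite E. simpl. destruct (N <=? S n)%nat; [pose proof (b_pos (S n))|]; lra. }
    assert (C3 : forall M, sum_f_R0 u M <= sum_f_R0 cT M + (sum_f_R0 u M + u (S M)) / 16).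
    { induction M.
      - simpl. assert (u O = 0) by (unfold u; destruct N; [lia|reflexivity]).
        pose proof (C1 O). lra.
      - simpl sum_f_R0. pose proof (C1 (S M)). lra. }
    set (A := fun K => sum_f_R0 (fun k => a (S k)) K).
    assert (C2 : forall K, (N1 <= K)%nat -> A K - A N1 <= 4 * sum_f_R0 u (S K)).
    { induction K; intros HK.
      - replace N1 with O by lia. pose proof (cond_pos_sum u (S O) Hu0). lra.
      - destruct (Nat.eq_dec N1 (S K)) as [E|E].
        + rewrite E. pose proof (cond_pos_sum u (S (S K)) Hu0). lra.
        + specialize (IHK ltac:(lia)). unfold A in *. simpl sum_f_R0 in *.
          assert (a (S (S K)) <= 4 * u (S (S K))).
          { unfold u. rewrite (proj2 (Nat.leb_le N (S (S K)))) by lia.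
            destruct (kk_spec (S (S K))) as [_ [Hk|Hk]]; [lia| |lra].
            unfold b. rewrite Hk. simpl. pose proof (HB (S (S K)) ltac:(lia)). lra. }
          lra. }
    destruct (ha_div (A N1 + 4 * (16 / eps + 1))) as [K0 HK0].
    set (K := Nat.max K0 N1).
    specialize (HK0 K ltac:(lia)). fold (A K) in HK0.
    specialize (C2 K ltac:(lia)).
    specialize (C3 (S K)). pose proof (Hu1 (S (S K))).
    destruct (PP_bound (S K)) as [P0 P1].
    assert (HT : 1 / eps <= sum_f_R0 cT (S K)).
    { unfold A in *. assert (16 / eps + 1 <= sum_f_R0 u (S K)) by lra.
      assert (16 * (1 / eps) = 16 / eps) by (field; lra). assert (0 < 1 / eps) by (apply Rdiv_lt_0_compat; lra). lra. }
    exists (S K).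
    assert (PP (S K) * (1 + 1 / eps) <= 1).
    { eapply Rle_trans; [|apply P1]. apply Rmult_le_compat_l; lra. }
    assert (PP (S K) * (1 + 1 / eps) * eps = PP (S K) * eps + PP (S K)) by (field; lra).
    nra.
Qed.

Lemma floor_ex x : 0 <= x -> exists j : nat, INR j <= x < INR j + 1.
Proof.
  intros Hx. destruct (archimed x) as [H1 H2].
  assert (Hz : (1 <= up x)%Z).
  { apply lt_IZR in H1 || idtac. assert (0 < IZR (up x)) by lra. apply lt_0_IZR in H. lia. }
  exists (Z.to_nat (up x - 1)).
  rewrite INR_IZR_INZ, Z2Nat.id by lia. rewrite minus_IZR. simpl. lra.
Qed.

Lemma lsum_map_seq (G : nat -> bool) (Lr d : R) n :
  lsum (map (fun j => if G j then (INR j / Lr - d, (INR j + 1) / Lr + d) else (0,0)) (seq 0 n))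
  = INR (cnt G n) * (1 / Lr + 2 * d).
Proof.
  induction n. simpl. ring.
  rewrite seq_S, map_app, lsum_app, IHn. simpl cnt. rewrite plus_INR. simpl map. simpl lsum.
  unfold lenp. simpl. destruct (G n); simpl; unfold Rdiv; ring.
Qed.

Lemma fam_ex eps : 0 < eps -> exists l : list (R*R),
  l <> nil /\ (forall p, In p l -> fst p <= snd p) /\ lsum l <= eps /\
  (forall t, 0 <= t < 1 -> (forall n, (N <= n)%nat -> ~ dist_grid_le t (m n) ((/4) ^ (m n) * a n)) ->
     exists p, In p l /\ fst p < t < snd p).
Proof.
  intros Heps. destruct (PP_small (eps / 2)) as [M HM]; [lra|].
  set (L := m (S M)). set (Lr := 4 ^ L).
  assert (HLr : 0 < Lr) by (apply pow_lt; lra).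
  set (d := eps / (4 * Lr)).
  assert (Hd : 0 < d) by (unfold d; apply Rdiv_lt_0_compat; lra).
  set (h := fun j => if Gb M j then (INR j / Lr - d, (INR j + 1) / Lr + d) else (0,0)).
  exists (map h (seq 0 (4 ^ L))). split; [|split; [|split]].
  - pose proof (pow4_pos L). destruct (4 ^ L)%nat; [lia|]. simpl. discriminate.
  - intros p Hp. apply in_map_iff in Hp. destruct Hp as [j [<- _]]. unfold h.
    destruct (Gb M j); simpl; [|lra].
    assert (0 <= INR j / Lr) by (unfold Rdiv; apply Rmult_le_pos; [apply pos_INR|left; apply Rinv_0_lt_compat; lra]).
    assert (INR j / Lr <= (INR j + 1) / Lr) by (unfold Rdiv; apply Rmult_le_compat_r; [left; apply Rinv_0_lt_compat; lra|lra]).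
    lra.
  - unfold h. rewrite lsum_map_seq. unfold L. rewrite count_eq. fold L. fold Lr.
    destruct (PP_bound M) as [P0 P1].
    assert (Hc : 0 <= sum_f_R0 cT M) by (apply cond_pos_sum; apply cT_nonneg).
    assert (PP M <= 1) by nra.
    replace (Lr * PP M * (1 / Lr + 2 * d)) with (PP M + PP M * (eps / 2)) by (unfold d; field; lra).
    nra.
  - intros t Ht Hbad. destruct (floor_ex (Lr * t)) as [j Hj]; [nra|].
    assert (Hjl : (j < 4 ^ L)%nat).
    { apply INR_lt. rewrite INR4pow. fold Lr. nra. }
    assert (HG : Gb M j = true) by (apply (Gb_bad M t j); [lra|exact Hj|exact Hbad]).
    exists (h j). split.
    + apply in_map, in_seq. lia.
    + unfold h. rewrite HG. simpl.
      assert (INR j / Lr <= t) by (apply Rmult_le_reg_l with Lr; auto; unfold Rdiv; field_simplify; lra).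
      assert (t < (INR j + 1) / Lr) by (apply Rmult_lt_reg_l with Lr; auto; unfold Rdiv; field_simplify; lra).
      lra.
Qed.
End FixN. End Main.

Theorem lemma2p3 (a : nat -> R) (m : nat -> nat)
  (ha_pos : forall n, (1 <= n)%nat -> 0 < a n)
  (ha_div : cv_infty (fun N => sum_f_R0 (fun k => a (S k)) N))
  (hm_pos : forall n, (1 <= n)%nat -> (1 <= m n)%nat)
  (hm_inc : forall n, (2 <= n)%nat -> (m (n - 1)%nat < m n)%nat)
  (hm_gap : forall n, (2 <= n)%nat ->
     1000 * (/ 4) ^ (m n) <= a n * (/ 4) ^ (m (n - 1)%nat)) :
  lebesgue_null (fun t =>
    0 <= t <= 1 /\
    ~ (forall N : nat, exists n : nat,
         (N <= n)%nat /\ (1 <= n)%nat /\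
         dist_grid_le t (m n) ((/ 4) ^ (m n) * a n))).
Proof.
  intros eps Heps.
  assert (He : forall N, 0 < eps / 2 ^ S N) by (intros; apply Rdiv_lt_0_compat; [lra|apply pow_lt; lra]).
  set (fam := fun N => proj1_sig (constructive_indefinite_description _
     (fam_ex a m ha_pos hm_inc hm_gap (S N) ltac:(lia) ha_div (eps / 2 ^ S N) (He N)))).
  apply (cover_lists _ eps fam Heps).
  - intros N. unfold fam. destruct (constructive_indefinite_description _ _) as [l Hl]. simpl. tauto.
  - intros N. unfold fam. destruct (constructive_indefinite_description _ _) as [l Hl]. simpl. tauto.
  - intros N. unfold fam. destruct (constructive_indefinite_description _ _) as [l Hl]. simpl. tauto.
  - intros t [Ht Hnot].
    assert (Ht1 : t < 1).
    { destruct Ht as [_ [Hlt|Heq]]; auto. exfalso. apply Hnot. intros N.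
      exists (Nat.max N 1). split; [lia|split; [lia|]].
      exists (4 ^ m (Nat.max N 1))%nat. rewrite INR4pow, pow4_inv_mul, Heq.
      rewrite Rminus_diag, Rabs_R0. apply Rmult_le_pos. apply pow_le; lra.
      left. apply ha_pos. lia. }
    apply not_all_ex_not in Hnot. destruct Hnot as [N0 HN0].
    exists N0. unfold fam. destruct (constructive_indefinite_description _ _) as [l Hl]. simpl.
    destruct Hl as [_ [_ [_ Hc]]]. apply Hc; [lra|].
    intros n Hn Hd. apply HN0. exists n. split; [lia|split; [lia|auto]].
Qed.
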